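(* Let $V$ be a finite-dimensional vector space over a field with basis $B=\{v_1,\dots,v_N\}$, and let $S$ be a (possibly infinite) set of pairwise commuting endomorphisms of $V$ such that: (a) for each $T\in S$, after reordering $B$, the matrix of $T$ with respect to $B$ is in Jordan canonical form; (b) for each $T\in S$, every Jordan block of size greater than $1$ has eigenvalue $0$. Let $B'\subset B$ be the set of basis vectors that are (genuine, not merely generalized) eigenvectors of every $T\in S$, and assume that distinct elements of $B'$ are distinguished by their $S$-eigenvalues, i.e.\ for $v_i\neq v_j$ in $B'$ there is $T\in S$ whose eigenvalues on $v_i$ and $v_j$ differ. Let $W\subset V$ be a subspace preserved by every $T\in S$. Then $W\neq0$ if and only if $W$ contains some element of $B'$. *)

(* Defs.v *)
(* Conventions: V = 'rV[F]_N (row vectors), basis B = the standard basis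
   e_i := delta_mx 0 i.  An endomorphism T of V is represented by a matrix
   A : 'M[F]_N acting on the right, T v = v *m A.  Hence T e_i = row i of A,
   and the matrix of T with respect to B (columns = coordinates of the
   images of the basis vectors) is A^T.  Subspaces of V are row spaces of
   matrices (mxalgebra). *)
From mathcomp Require Import all_boot all_order all_algebra all_fingroup.
Set Implicit Arguments. Unset Strict Implicit. Unset Printing Implicit Defensive.
Import GRing.Theory.
Local Open Scope ring_scope.

Definition basis_vec (F : fieldType) (N : nat) (i : 'I_N) : 'rV[F]_N :=
  delta_mx 0 i.

Definition mat_of_endo (F : fieldType) (N : nat) (A : 'M[F]_N) : 'M[F]_N := A^T.

Definition reorder (F : fieldType) (N : nat) (s : 'S_N) (M : 'M[F]_N)
  : 'M[F]_N := \matrix_(i, j) M (s i) (s j).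

(* Blocks are
   the maximal runs of consecutive indices linked by superdiagonal 1's. *)
Definition is_jordan_form (F : fieldType) (N : nat) (M : 'M[F]_N) : Prop :=
  [/\ (forall i j : 'I_N, (j : nat) <> i -> (j : nat) <> i.+1 -> M i j = 0),
      (forall i j : 'I_N, (j : nat) = i.+1 -> M i j = 0 \/ M i j = 1) &
      (forall i j : 'I_N, (j : nat) = i.+1 -> M i j = 1 -> M i i = M j j)].

Definition big_blocks_nilpotent (F : fieldType) (N : nat) (M : 'M[F]_N) : Prop :=
  forall i j : 'I_N, (j : nat) = i.+1 -> M i j = 1 -> M i i = 0.

Definition eigvec_with (F : fieldType) (N : nat) (A : 'M[F]_N) (v : 'rV[F]_N)
  (c : F) : Prop := v != 0 /\ v *m A = c *: v.

Definition is_eigvec (F : fieldType) (N : nat) (A : 'M[F]_N) (v : 'rV[F]_N) : Prop :=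
  exists c, eigvec_with A v c.

Definition in_Bprime (F : fieldType) (N : nat) (S : 'M[F]_N -> Prop) (i : 'I_N)
  : Prop := forall A, S A -> is_eigvec A (basis_vec F i).

(* Main.v *)
Require Import Defs.
From mathcomp Require Import all_boot all_order all_algebra all_fingroup.
From Stdlib Require Import Classical.
Import GRing.Theory.
Local Open Scope ring_scope.

Section Helpers.
Variables (F : fieldType) (N : nat).
Implicit Types (s : {perm 'I_N}) (h i j : 'I_N) (A : 'M[F]_N) (u : 'rV[F]_N).

Definition Jm (s : 'S_N) A := reorder s (mat_of_endo A).

Lemma JmE s A i j : Jm s A i j = A (s j) (s i).
Proof. by rewrite /Jm /reorder /mat_of_endo !mxE. Qed.

Lemma coordA s A u i : (u *m A) 0 (s i) = \sum_j u 0 (s j) * Jm s A i j.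
Proof.
rewrite mxE (reindex_inj (@perm_inj _ s)); apply: eq_bigr => j _.
by rewrite JmE.
Qed.

Lemma coord1 s A u i : is_jordan_form (Jm s A) ->
  (forall j : 'I_N, (j : nat) = i.+1 -> u 0 (s j) = 0) ->
  (u *m A) 0 (s i) = Jm s A i i * u 0 (s i).
Proof.
case=> H1 _ _ Hu; rewrite coordA (bigD1 i) //= big1 ?addr0 1?mulrC //.
move=> j ji; case: (boolP ((j : nat) == i.+1)) => [/eqP ej|nej].
  by rewrite Hu // mul0r.
rewrite H1 ?mulr0 //; last by apply/eqP.
by move=> h; move/eqP: ji; apply; apply: val_inj.
Qed.

Lemma coord2 s A u i j : is_jordan_form (Jm s A) -> (j : nat) = i.+1 ->
  (u *m A) 0 (s i) = Jm s A i i * u 0 (s i) + Jm s A i j * u 0 (s j).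
Proof.
case=> H1 _ _ ej.
have ji : j != i by rewrite -val_eqE /= ej (gtn_eqF (ltnSn i)).
rewrite coordA (bigD1 i) //= (bigD1 j) ?ji //= big1 ?addr0 ?(mulrC (u 0 _)) //.
move=> k /andP[ki kj]; rewrite H1 ?mulr0 //.
  by move=> h; move/eqP: ki; apply; apply: val_inj.
by move=> h; move/eqP: kj; apply; apply: val_inj => /=; rewrite h ej.
Qed.

Lemma zero_coords s u : (forall i, u 0 (s i) = 0) -> u = 0.
Proof.
move=> H; apply/rowP => k; rewrite mxE.
by have := H (s^-1 k)%g; rewrite permKV => ->.
Qed.

Lemma eig_exists s A (U : 'M[F]_N) : is_jordan_form (Jm s A) ->
  (U *m A <= U)%MS -> U != 0 ->
  exists2 u : 'rV[F]_N, (u <= U)%MS & exists c, u != 0 /\ u *m A = c *: u.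
Proof.
move=> HJ HUA /eqP U0.
have [r nzr] : exists r, row r U != 0.
  apply: NNPP => H; apply: U0; apply/matrixP => a b; rewrite mxE.
  have : row a U = 0 by apply: NNPP => H'; apply: H; exists a; apply/eqP.
  by move/matrixP/(_ 0 b); rewrite !mxE.
suff : forall m u, (u <= U)%MS -> u != 0 ->
    (forall i, (m <= i)%N -> u 0 (s i) = 0) ->
  exists2 u : 'rV[F]_N, (u <= U)%MS & exists c, u != 0 /\ u *m A = c *: u.
  by move/(_ N (row r U) (row_sub _ _) nzr); apply => i; rewrite leqNgt ltn_ord.
elim=> [|m IH] u uU nzu Hu.
  by move: nzu; rewrite (@zero_coords s u) ?eqxx // => i; apply: Hu.
case: (ltnP m N) => [mN|Nm]; last first.
  apply: (IH u) => // i mi.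
  by have := leq_trans Nm mi; rewrite leqNgt ltn_ord.
pose im := Ordinal mN.
pose v := u *m A - Jm s A im im *: u.
have vU : (v <= U)%MS.
  apply: addmx_sub; first exact: submx_trans (submxMr _ uU) HUA.
  by rewrite -scaleNr; apply: scalemx_sub.
have [v0|nzv] := eqVneq v 0.
  exists u => //; exists (Jm s A im im); split => //.
  by apply/eqP; rewrite -subr_eq0 -/v v0.
apply: (IH v) => // i mi.
have Hc : (u *m A) 0 (s i) = Jm s A i i * u 0 (s i).
  apply: coord1 => // j ej; apply: Hu; rewrite ej; exact: leq_trans mi _.
rewrite /v mxE Hc !mxE.

case: (eqVneq i im) => [->|ne]; first by rewrite subrr.
rewrite Hu ?mulr0 ?subrr //.
by rewrite ltn_neqAle mi andbT; apply: contra ne => /eqP e; apply/eqP/val_inj.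
Qed.

Lemma eig_support s A u c i : is_jordan_form (Jm s A) -> u *m A = c *: u ->
  u 0 (s i) != 0 ->
  Jm s A i i = c /\ forall h, (h.+1 = i :> nat) -> Jm s A h i = 0.
Proof.
move=> HJ Hu.
have Hc k : (u *m A) 0 (s k) = c * u 0 (s k) by rewrite Hu mxE.
suff : forall n i, (N <= i + n)%N -> u 0 (s i) != 0 ->
  Jm s A i i = c /\ forall h, (h.+1 = i :> nat) -> Jm s A h i = 0.
  by move=> H; apply: (H N); rewrite leq_addl.
elim=> [|n IH] {}i.
  by rewrite addn0 leqNgt ltn_ord.
move=> Hn nz.
have dic : Jm s A i i = c.
  case: (ltnP i.+1 N) => [iN|Ni].
    pose j := Ordinal iN.
    have := @coord2 s A u i j HJ (erefl (j : nat)); rewrite Hc.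
    have -> : Jm s A i j * u 0 (s j) = 0.
      have [->|nzj] := eqVneq (u 0 (s j)) 0; first by rewrite mulr0.
      have Hj : (N <= j + n)%N by rewrite /= addSnnS.
      by have [_ ->] := IH j Hj nzj; rewrite ?mul0r.
    by rewrite addr0 => /(mulIf nz).
  have Hp : forall j, (j : nat) = i.+1 -> u 0 (s j) = 0.
    by move=> j ej; move: (ltn_ord j); rewrite ej ltnNge Ni.
  by have := @coord1 s A u i HJ Hp; rewrite Hc => /(mulIf nz).
split => // h eh.
have HJ' := HJ; case: HJ' => _ H2 H3.
have [//|h1] := H2 h i (esym eh).
have := @coord2 s A u h i HJ (esym eh); rewrite Hc h1 (H3 h i (esym eh) h1) dic mul1r.
by move/eqP; rewrite -subr_eq0 opprD addrA subrr add0r oppr_eq0 (negbTE nz).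
Qed.

Lemma basis_eig s A c i : is_jordan_form (Jm s A) -> Jm s A i i = c ->
  (forall h, (h.+1 = i :> nat) -> Jm s A h i = 0) ->
  basis_vec F (s i) *m A = c *: basis_vec F (s i).
Proof.
case=> H1 _ _ dic Hh; apply/rowP => k.
rewrite -(permKV s k); set p := (s^-1 k)%g.
rewrite /basis_vec -rowE !mxE -JmE (inj_eq (@perm_inj _ s)).
case: (eqVneq i p) => [<-|ne]; first by rewrite mulr1.
rewrite mulr0; case: (eqVneq (i : nat) p.+1) => [e|ne2]; first by apply: Hh.
apply: H1 => [e|]; last by apply/eqP.
by move/eqP: ne; apply; apply: val_inj.
Qed.

End Helpers.

Lemma common_eig (F : fieldType) (N : nat) (S : 'M[F]_N -> Prop)
  (Hcomm : forall A B, S A -> S B -> A *m B = B *m A)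
  (Hjordan : forall A, S A -> exists s : 'S_N, is_jordan_form (@Jm F N s A)) :
  forall r (U : 'M[F]_N), (\rank U <= r)%N -> U != 0 ->
  (forall A, S A -> (U *m A <= U)%MS) ->
  exists2 u : 'rV[F]_N, (u <= U)%MS &
    u != 0 /\ forall A, S A -> exists c, u *m A = c *: u.
Proof.
elim=> [|r IH] U rU nzU HU.
  by move: nzU; rewrite -mxrank_eq0; move: rU; case: (\rank U).
case: (classic (exists A, S A /\ forall c, ~ (U <= kermx (A - c%:M))%MS)).
  case=> A [SA Hnot].
  have [s HJ] := Hjordan A SA.
  have [u uU [c [nzu uA]]] := @eig_exists F N s A U HJ (HU A SA) nzU.
  pose U' := (U :&: kermx (A - c%:M))%MS.
  have uK : (u <= kermx (A - c%:M))%MS.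
    by rewrite sub_kermx mulmxBr mul_mx_scalar uA subrr.
  have U'U : (U' <= U)%MS by apply: capmxSl.
  have nzU' : U' != 0.
    apply: contra nzu => /eqP U'0.
    have : (u <= U')%MS by rewrite sub_capmx uU uK.
    by rewrite U'0 submx0.
  have rU' : (\rank U' <= r)%N.
    have : (U' < U)%MS.
      rewrite ltmxE U'U /=; apply/negP => UU'.
      by apply: (Hnot c); apply: submx_trans UU' (capmxSr _ _).
    by rewrite ltmxErank => /andP[_ h]; rewrite -ltnS; apply: leq_trans h rU.
  have HU' : forall B, S B -> (U' *m B <= U')%MS.
    move=> B SB; rewrite sub_capmx; apply/andP; split.
      exact: submx_trans (submxMr _ U'U) (HU B SB).
    rewrite sub_kermx -mulmxA mulmxBr (Hcomm B A) // scalar_mxC.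
    by rewrite -mulmxBl mulmxA; move: (capmxSr U (kermx (A - c%:M))); 
       rewrite sub_kermx => /eqP ->; rewrite mul0mx.
  have [v vU' Hv] := IH U' rU' nzU' HU'.
  by exists v => //; apply: submx_trans vU' U'U.
move=> Hall.
have [i nzi] : exists i, row i U != 0.
  apply: NNPP => H; move/eqP: nzU; apply; apply/matrixP => a b; rewrite mxE.
  have : row a U = 0 by apply: NNPP => H'; apply: H; exists a; apply/eqP.
  by move/matrixP/(_ 0 b); rewrite !mxE.
exists (row i U); first exact: row_sub.
split => // A SA.
have [c Hc] : exists c, (U <= kermx (A - c%:M))%MS.
  apply: NNPP => H; apply: Hall; exists A; split => // c Hc; apply: H.
  by exists c.
exists c; move: (submx_trans (row_sub i U) Hc); rewrite sub_kermx.
by rewrite mulmxBr mul_mx_scalar subr_eq0 => /eqP.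
Qed.

Lemma basis_nz (F : fieldType) (N : nat) (k : 'I_N) : basis_vec F k != 0.
Proof.
apply/eqP => h; have := congr1 (fun M : 'rV[F]_N => M 0 k) h.
by rewrite !mxE !eqxx /= => /eqP; rewrite oner_eq0.
Qed.

Lemma scale_basis (F : fieldType) (N : nat) (k : 'I_N) (a b : F) :
  a *: basis_vec F k = b *: basis_vec F k -> a = b.
Proof.
move=> h; have := congr1 (fun M : 'rV[F]_N => M 0 k) h.
by rewrite !mxE !eqxx /= !mulr1.
Qed.

Theorem lemma5p2 (F : fieldType) (N : nat) (S : 'M[F]_N -> Prop)
  (Hcomm : forall A B, S A -> S B -> A *m B = B *m A)
  (Hjordan : forall A, S A -> exists s : 'S_N,
      is_jordan_form (reorder s (mat_of_endo A)) /\
      big_blocks_nilpotent (reorder s (mat_of_endo A)))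
  (Hsep : forall i j : 'I_N, in_Bprime S i -> in_Bprime S j -> i != j ->
      exists A, [/\ S A & exists ci cj, [/\ eigvec_with A (basis_vec F i) ci,
                                              eigvec_with A (basis_vec F j) cj &
                                              ci != cj]])
  (W : 'M[F]_N)
  (HW : forall A, S A -> (W *m A <= W)%MS) :
  W != 0 <-> exists i : 'I_N, in_Bprime S i /\ (basis_vec F i <= W)%MS.
Proof.
have Hj : forall A, S A -> exists s : 'S_N, is_jordan_form (@Jm F N s A).
  by move=> A SA; have [s [h _]] := Hjordan A SA; exists s.
split; last first.
  case=> i [_ iW]; apply: contraTneq iW => ->; rewrite submx0; exact: basis_nz.
move=> nzW.
have [u uW [nzu Hu]] := @common_eig F N S Hcomm Hj _ W (leqnn _) nzW HW.
have eigk : forall k, u 0 k != 0 -> forall A, S A -> forall c,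
    u *m A = c *: u -> basis_vec F k *m A = c *: basis_vec F k.
  move=> k nzk A SA c uA; have [s HJ] := Hj A SA.
  rewrite -(permKV s k) in nzk *.
  have [dic Hh] := @eig_support F N s A u c _ HJ uA nzk.
  exact: @basis_eig F N s A c _ HJ dic Hh.
have inB : forall k, u 0 k != 0 -> in_Bprime S k.
  move=> k nzk A SA; have [c uA] := Hu A SA; exists c; split.
    exact: basis_nz.
  exact: eigk nzk A SA c uA.
have [k nzk] : exists k, u 0 k != 0.
  apply: NNPP => H; move/eqP: nzu; apply; apply/rowP => k; rewrite mxE.
  by apply: NNPP => H'; apply: H; exists k; apply/eqP.
have uniq : forall k', u 0 k' != 0 -> k' = k.
  move=> k' nzk'; apply: NNPP => ne.
  have [A [SA [ci [cj [[_ eA] [_ eB] nec]]]]] :=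
    Hsep k' k (inB k' nzk') (inB k nzk) (introN eqP ne).
  have [c uA] := Hu A SA.
  move: (eigk _ nzk' A SA c uA) (eigk _ nzk A SA c uA).
  rewrite eA eB => /scale_basis e1 /scale_basis e2.
  by rewrite e1 e2 eqxx in nec.
have uE : u = u 0 k *: basis_vec F k.
  apply/rowP => m; rewrite !mxE.
  case: (eqVneq m k) => [->|nmk]; first by rewrite eqxx mulr1.
  rewrite andbF mulr0.
  by apply: NNPP => H; apply: (negP nmk); apply/eqP; apply: uniq; apply/eqP.
exists k; split; first exact: inB.
have -> : basis_vec F k = (u 0 k)^-1 *: u by rewrite {2}uE scalerA mulVf ?scale1r.
exact: scalemx_sub.
Qed.
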